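(* Let $n\ge 1$ and consider the NSGA-II with population size $N\ge 4(n+1)$ optimizing \textsc{OneMinMax} (with any way of generating the offspring population $Q_t$). Suppose that in some iteration $t$ the combined population $R_t=P_t\cup Q_t$ contains an individual $x$ with $f(x)=(k,n-k)$ for some $k\in\{0,\dots,n\}$. Then the next parent population $P_{t+1}$ contains an individual $y$ with $f(y)=(k,n-k)$.
   Context: Search space $\{0,1\}^n$; objective $f=(f_1,f_2):\{0,1\}^n\to\mathbb{R}^2$, both objectives maximized. $x$ strictly dominates $y$ if $f_1(x)\ge f_1(y)$, $f_2(x)\ge f_2(y)$ and at least one inequality is strict. Populations are multisets of bit strings; for a population $P$, $f(P)=\{f(x):x\in P\}$. Non-dominated sorting of a population $S$: $F_1$ is the set of individuals of $S$ not strictly dominated by any individual of $S$; inductively, $F_{k+1}$ is the set of individuals of $S\setminus(F_1\cup\dots\cup F_k)$ not strictly dominated by any individual of $S\setminus(F_1\cup\dots\cup F_k)$; the rank of $x$ in $S$ is the $k$ with $x\in F_k$. Crowding distance of the individuals of a set $S$ (computed with respect to $S$): start with $\mathrm{cDis}(x)=0$ for all $x\in S$; for each $i\in\{1,2\}$, sort $S$ in ascending $f_i$-value as $S_{i.1},\dots,S_{i.|S|}$ (ties broken arbitrarily), set $\mathrm{cDis}(S_{i.1})=\mathrm{cDis}(S_{i.|S|})=+\infty$, and for $2\le j\le |S|-1$ add $\frac{f_i(S_{i.j+1})-f_i(S_{i.j-1})}{f_i(S_{i.|S|})-f_i(S_{i.1})}$ to $\mathrm{cDis}(S_{i.j})$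 (if $f_i$ is constant on $S$, these summands are taken to be $0$). The NSGA-II with population size $N$: $P_0$ consists of $N$ independent uniformly random bit strings; in iteration $t=0,1,2,\dots$ it generates an offspring population $Q_t$ of $N$ individuals, sets $R_t=P_t\cup Q_t$ (multiset union, $2N$ individuals), computes the fronts $F_1,F_2,\dots$ of $R_t$, lets $i^*$ be minimal with $\sum_{i\le i^*}|F_i|\ge N$, computes the crowding distance of each individual of $F_i$ ($i\le i^*$) with respect to $F_i$, and sets $P_{t+1}=F_1\cup\dots\cup F_{i^*-1}\cup\tilde F_{i^*}$, where $\tilde F_{i^*}$ consists of the $N-\sum_{i<i^*}|F_i|$ individuals of $F_{i^*}$ with largest crowding distance, ties broken uniformly at random. \textsc{OneMinMax}: $f(x)=(n-\sum_{i=1}^n x_i,\ \sum_{i=1}^n x_i)$. Its Pareto front is $\{(k,n-k):k\in\{0,\dots,n\}\}$; every bit string is Pareto optimal. *)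

(* Defs.v *)
From mathcomp Require Import all_boot all_order all_algebra.
Set Implicit Arguments. Unset Strict Implicit. Unset Printing Implicit Defensive.
Import Order.TTheory GRing.Theory Num.Theory.
Local Open Scope ring_scope.

Section NSGA2.
(* Individuals of the combined population R_t are indexed by a finite type I
   (so R_t is a multiset: distinct indices may carry equal bit strings);
   fv i = (f_1, f_2) of individual i. *)
Variable I : finType.
Variable fv : I -> rat * rat.

Definition f1 (i : I) : rat := (fv i).1.
Definition f2 (i : I) : rat := (fv i).2.

Definition sdom (x y : I) : bool :=
  [&& f1 y <= f1 x, f2 y <= f2 x & (f1 y < f1 x) || (f2 y < f2 x)].

Definition nondom (S : {set I}) : {set I} :=
  [set x in S | [forall y in S, ~~ sdom y x]].

(* rest S k = S minus F_1 ... F_k ;  front S k = F_{k+1} (0-indexed) *)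
Fixpoint rest (S : {set I}) (k : nat) : {set I} :=
  match k with
  | 0 => S
  | k'.+1 => rest S k' :\: nondom (rest S k')
  end.
Definition front (S : {set I}) (k : nat) : {set I} := nondom (rest S k).

(* Crowding distance: None stands for +infinity. *)
Definition cd_le (a b : option rat) : bool :=
  match a, b with
  | _, None => true
  | None, Some _ => false
  | Some x, Some y => x <= y
  end.

(* contribution of objective g, for a list s sorting the set ascending in g *)
Definition cd_boundary (s : seq I) (x : I) : bool :=
  (index x s == 0)%N || (index x s == (size s).-1)%N.

Definition cd_term (g : I -> rat) (x0 : I) (s : seq I) (x : I) : rat :=
  let p := index x s in
  let d := g (last x0 s) - g (head x0 s) in
  if d == 0 then 0 else (g (nth x0 s p.+1) - g (nth x0 s p.-1)) / d.

Definition cdist (s1 s2 : seq I) (x : I) : option rat :=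
  if cd_boundary s1 x || cd_boundary s2 x then None
  else Some (cd_term f1 x s1 x + cd_term f2 x s2 x).

Definition sorting_of (g : I -> rat) (F : {set I}) (s : seq I) : Prop :=
  perm_eq s (enum F) /\ sorted (fun a b => g a <= g b) s.

(* P is a possible outcome of the NSGA-II survival selection of N individuals
   from the combined population S (= R_t), for some admissible tie-breaking. *)
Definition nsga2_select (N : nat) (S P : {set I}) : Prop :=
  exists istar : nat,
    (N <= #|S :\: rest S istar.+1|)%N /\
    (forall j, (j < istar)%N -> (#|S :\: rest S j.+1| < N)%N) /\
    exists s1 s2 : seq I,
      sorting_of f1 (front S istar) s1 /\ sorting_of f2 (front S istar) s2 /\
      exists T : {set I},
        [/\ T \subset front S istar,
            #|T| = (N - #|S :\: rest S istar|)%N,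
            (forall a b, a \in T -> b \in front S istar :\: T ->
                 cd_le (cdist s1 s2 b) (cdist s1 s2 a))
          & P = (S :\: rest S istar) :|: T].

End NSGA2.

Definition OneMinMax (n : nat) (x : n.-tuple bool) : rat * rat :=
  (((n - count id x)%N)%:R, (count id x)%:R).

(* Main.v *)
Require Import Defs.
From mathcomp Require Import all_boot all_order all_algebra zify.
Import Order.TTheory GRing.Theory Num.Theory.
Local Open Scope ring_scope.

Lemma cardU_le (T : finType) (A B : {set T}) : (#|A :|: B| <= #|A| + #|B|)%N.
Proof. by rewrite -cardsUI leq_addr. Qed.

Section Gen.
Variable I : finType.
Variable g : I -> rat.
Variable s : seq I.
Hypothesis Hs : sorted (fun a b => g a <= g b) s.

Lemma le_nth x0 i j : (i <= j)%N -> (j < size s)%N -> g (nth x0 s i) <= g (nth x0 s j).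
Proof.
move=> ij js.
have tr : transitive (fun a b => g a <= g b).
  by move=> a b c /= h1 h2; apply: le_trans h1 h2.
have rf : reflexive (fun a b => g a <= g b) by move=> a /=.
apply: (sorted_leq_nth tr rf x0 Hs) => //.
by rewrite inE; apply: leq_ltn_trans js.
Qed.

Definition FB := [set x | (x \in s) && ((index x s == 0)%N || (g (nth x s (index x s).-1) < g x))].
Definition LB := [set x | (x \in s) && ((index x s == (size s).-1)%N || (g x < g (nth x s (index x s).+1)))].

Lemma fb_lt x y : x \in s -> y \in s -> (index x s < index y s)%N ->
  ((index y s == 0)%N || (g (nth y s (index y s).-1) < g y)) -> g x < g y.
Proof.
move=> xs ys ij /orP[/eqP h|h]; first by rewrite h in ij.
apply: le_lt_trans h.
rewrite -{1}(nth_index y xs).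
apply: le_nth; first by rewrite -ltnS prednK // (leq_ltn_trans _ ij).
rewrite (leq_ltn_trans (leq_pred _)) // index_mem //.
Qed.

Lemma lb_lt x y : x \in s -> y \in s -> (index x s < index y s)%N ->
  ((index x s == (size s).-1)%N || (g x < g (nth x s (index x s).+1))) -> g x < g y.
Proof.
move=> xs ys ij /orP[/eqP h|h].
  have : (index y s < size s)%N by rewrite index_mem.
  rewrite h in ij; have : (0 < size s)%N by case: (s) xs.
  by move=> hs; rewrite -(prednK hs) ltnS leqNgt ij.
apply: lt_le_trans h _.
rewrite -(nth_index x ys).
by apply: le_nth => //; rewrite index_mem.
Qed.

Lemma FB_card m (v : I -> 'I_m) (hv : forall x y, v x = v y -> g x = g y) :
  (#|FB| <= m)%N.
Proof.
rewrite -(card_in_imset (f := v)).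
  by apply: leq_trans (max_card _) _; rewrite card_ord.
move=> x y; rewrite !inE => /andP[xs hx] /andP[ys hy] /hv gxy.
case: (ltngtP (index x s) (index y s)) => ij.
- by have := @fb_lt x y xs ys ij hy; rewrite gxy ltxx.
- by have := @fb_lt y x ys xs ij hx; rewrite gxy ltxx.
- by rewrite -(nth_index x xs) ij nth_index.
Qed.

Lemma LB_card m (v : I -> 'I_m) (hv : forall x y, v x = v y -> g x = g y) :
  (#|LB| <= m)%N.
Proof.
rewrite -(card_in_imset (f := v)).
  by apply: leq_trans (max_card _) _; rewrite card_ord.
move=> x y; rewrite !inE => /andP[xs hx] /andP[ys hy] /hv gxy.
case: (ltngtP (index x s) (index y s)) => ij.
- by have := @lb_lt x y xs ys ij hx; rewrite gxy ltxx.
- by have := @lb_lt y x ys xs ij hy; rewrite gxy ltxx.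
- by rewrite -(nth_index x xs) ij nth_index.
Qed.

Lemma term0 x : g (nth x s (index x s).+1) = g (nth x s (index x s).-1) -> cd_term g x s x = 0.
Proof. by move=> h; rewrite /cd_term; case: ifP => // _; rewrite h subrr mul0r. Qed.

Lemma d_ge0 x : x \in s -> 0 <= g (last x s) - g (head x s).
Proof.
move=> xs; have hs : (0 < size s)%N by case: (s) xs.
rewrite subr_ge0 -nth_last -nth0; apply: le_nth => //.
by rewrite prednK.
Qed.

Lemma term_ge0 x : x \in s -> (index x s != (size s).-1)%N -> 0 <= cd_term g x s x.
Proof.
move=> xs hne; rewrite /cd_term; case: ifP => // _.
apply: divr_ge0; last exact: d_ge0.
rewrite subr_ge0; apply: le_nth; first by rewrite (leq_trans (leq_pred _)).
have hi : (index x s < size s)%N by rewrite index_mem.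
have hs : (0 < size s)%N by case: (s) xs.
by move: hi hne hs; lia.
Qed.

Lemma term_gt0 x : x \in s -> (index x s != (size s).-1)%N -> (index x s != 0)%N ->
  g (nth x s (index x s).-1) < g x -> 0 < cd_term g x s x.
Proof.
move=> xs hne h0 hlt.
have hi : (index x s < size s)%N by rewrite index_mem.
have hs : (0 < size s)%N by case: (s) xs.
have hi1 : ((index x s).+1 < size s)%N.
  by move: hi hne hs; lia.
have h2 : g x <= g (nth x s (index x s).+1).
  by rewrite -{1}(nth_index x xs); apply: le_nth.
have hnum : 0 < g (nth x s (index x s).+1) - g (nth x s (index x s).-1).
  by rewrite subr_gt0; apply: lt_le_trans h2.
have hd : 0 < g (last x s) - g (head x s).
  rewrite subr_gt0 -nth_last -nth0.
  have hh0 : g (nth x s 0) <= g (nth x s (index x s).-1).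
    by apply: le_nth => //; move: hi; lia.
  have hl : g x <= g (nth x s (size s).-1).
    by rewrite -{1}(nth_index x xs); apply: le_nth; move: hi hs; lia.
  exact: le_lt_trans hh0 (lt_le_trans hlt hl).
rewrite /cd_term gt_eqF //; exact: divr_gt0.
Qed.

End Gen.
Arguments FB {I} g s.
Arguments LB {I} g s.

Lemma mid_eq (I : finType) (g : I -> rat) s x : sorted (fun a b => g a <= g b) s -> x \in s ->
  (index x s != 0)%N -> (index x s != (size s).-1)%N ->
  ~~ (g (nth x s (index x s).-1) < g x) -> ~~ (g x < g (nth x s (index x s).+1)) ->
  g (nth x s (index x s).+1) = g (nth x s (index x s).-1).
Proof.
move=> Hs xs h0 hne; rewrite -!leNgt => ha hb.
have hi : (index x s < size s)%N by rewrite index_mem.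
have e1 : g (nth x s (index x s).-1) = g x.
  apply/le_anti; rewrite ha andbT.
  have := @le_nth _ g s Hs x (index x s).-1 (index x s).
  by rewrite nth_index //; apply; lia.
have e2 : g (nth x s (index x s).+1) = g x.
  apply/le_anti; rewrite hb /=.
  have := @le_nth _ g s Hs x (index x s) (index x s).+1.
  by rewrite nth_index //; apply; move: hi hne; lia.
by rewrite e1 e2.
Qed.

Definition pos (c : option rat) := ~~ cd_le c (Some 0).

Lemma pos_trans a b : cd_le a b -> pos a -> pos b.
Proof.
rewrite /pos; case: a => [x|]; case: b => [y|] //= hxy.
rewrite -!ltNge => hx; exact: lt_le_trans hx hxy.
Qed.

Lemma pos_sub (I : finType) (fv : I -> rat * rat) s1 s2 x :
  sorted (fun a b => f1 fv a <= f1 fv b) s1 -> sorted (fun a b => f2 fv a <= f2 fv b) s2 ->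
  x \in s1 -> x \in s2 -> pos (cdist fv s1 s2 x) ->
  x \in FB (f1 fv) s1 :|: LB (f1 fv) s1 :|: FB (f2 fv) s2 :|: LB (f2 fv) s2.
Proof.
move=> H1 H2 x1 x2 hpos; apply/negPn/negP => hn; move: hpos.
rewrite !inE x1 x2 /= !negb_or in hn.
case/andP: hn => /andP[] /andP[] /andP[a0 a1] /andP[b0 b1] /andP[c0 c1] /andP[d0 d1].
rewrite /pos /cdist /cd_boundary (negbTE a0) (negbTE b0) (negbTE c0) (negbTE d0) /=.
rewrite !term0 ?addr0 ?lexx //; exact: mid_eq.
Qed.

Lemma pos_first (I : finType) (fv : I -> rat * rat) s1 s2 x :
  sorted (fun a b => f1 fv a <= f1 fv b) s1 -> sorted (fun a b => f2 fv a <= f2 fv b) s2 ->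
  x \in s1 -> x \in s2 -> (index x s1 != 0)%N ->
  f1 fv (nth x s1 (index x s1).-1) < f1 fv x -> pos (cdist fv s1 s2 x).
Proof.
move=> H1 H2 x1 x2 h0 hlt; rewrite /pos /cdist /cd_boundary (negbTE h0) /=.
case: (boolP (index x s1 == (size s1).-1)) => //= e1.
case: (boolP (index x s2 == 0%N)) => //= e2.
case: (boolP (index x s2 == (size s2).-1)) => //= e3.
rewrite -ltNge; apply: (lt_le_trans (@term_gt0 I (f1 fv) s1 H1 x x1 e1 h0 hlt)).
by rewrite lerDl; exact: (@term_ge0 I (f2 fv) s2 H2 x x2 e3).
Qed.

Theorem lemma1 (n N : nat) (hn : (1 <= n)%N) (hN : (4 * (n + 1) <= N)%N)
  (R : 'I_(N + N) -> n.-tuple bool) (P : {set 'I_(N + N)}) :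
  nsga2_select (fun j => OneMinMax (R j)) N setT P ->
  forall (k : nat) (x : 'I_(N + N)), (k <= n)%N ->
    OneMinMax (R x) = (k%:R, (n - k)%N%:R) ->
    exists2 y, y \in P & OneMinMax (R y) = (k%:R, (n - k)%N%:R).
Proof.
move=> hsel k x hk hx.
set fv := fun j => OneMinMax (R j) in hsel.
pose c := fun j => count id (R j).
have cn j : (c j <= n)%N by rewrite /c (leq_trans (count_size _ _)) // size_tuple.
have ef1 j : f1 fv j = (n - c j)%N%:R by [].
have ef2 j : f2 fv j = (c j)%:R by [].
have nodom y z : ~~ sdom fv y z.
  rewrite /sdom !ef1 !ef2 !ler_nat !ltr_nat; have := cn y; have := cn z.
  move=> h1 h2; apply/negP => /and3P[a1 a2 /orP[a3|a3]]; lia.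
have nd S : nondom fv S = S.
  apply/setP => z; rewrite inE; case: (z \in S) => //=.
  by apply/forall_inP => y _; exact: nodom.
have r1 : rest fv setT 1 = set0 by rewrite /= nd setDv.
case: hsel => istar [h1 [h2 [s1 [s2 [[p1 so1] [[p2 so2] [T [Tsub Tcard Tcd ->]]]]]]]].
have ist0 : istar = 0%N.
  case: istar h1 h2 Tsub Tcard Tcd p1 p2 so1 so2 => [|i] // _ h2.
  by move: (h2 0%N isT); rewrite r1 setD0 cardsT card_ord; lia.
subst istar.
have fr : front fv setT 0 = setT by rewrite /front /= nd.
rewrite fr in Tcd p1 p2.
rewrite /= setDv cards0 subn0 in Tcard.
rewrite setDv set0U.
have in1 z : z \in s1 by rewrite (perm_mem p1) mem_enum inE.
have in2 z : z \in s2 by rewrite (perm_mem p2) mem_enum inE.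
have us1 : uniq s1 by rewrite (perm_uniq p1) enum_uniq.
pose a := fun y => f1 fv y == f1 fv x.
have ha : has a s1 by apply/hasP; exists x; rewrite ?in1 /a ?eqxx.
pose q := find a s1; pose x' := nth x s1 q.
have hq : (q < size s1)%N by rewrite -has_find.
have ax' : a x' := nth_find x ha.
have ix' : index x' s1 = q := index_uniq x hq us1.
have cx' : c x' = c x.
  move: ax'; rewrite /a !ef1 eqr_nat => /eqP; have := cn x; have := cn x'; lia.
have vx' : OneMinMax (R x') = OneMinMax (R x).
  by rewrite /OneMinMax; rewrite /c in cx'; rewrite cx'.
case: (boolP (x' \in T)) => hT; first by exists x' => //; rewrite vx'.
have px' : pos (cdist fv s1 s2 x').
  case: (posnP q) => q0.
    by rewrite /pos /cdist /cd_boundary ix' q0.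
  apply: pos_first => //; first by rewrite ix' -lt0n.
  rewrite ix' lt_neqAle; apply/andP; split.
    rewrite (set_nth_default x); last by rewrite (leq_ltn_trans (leq_pred _)).
    have := before_find x (i := q.-1) (a := a) (s := s1).
    rewrite /a (eqP ax') => -> //; rewrite prednK //.
  have := @le_nth _ (f1 fv) s1 so1 x' q.-1 q (leq_pred _) hq.
  have e : nth x' s1 q = x' by rewrite (set_nth_default x).
  by rewrite e.
have posT z : z \in x' |: T -> pos (cdist fv s1 s2 z).
  rewrite !inE => /orP[/eqP -> //|zT].
  apply: pos_trans px'; apply: Tcd => //; by rewrite !inE hT.
have sub : x' |: T \subset (FB (f1 fv) s1 :|: LB (f1 fv) s1 :|: FB (f2 fv) s2 :|: LB (f2 fv) s2).
  apply/subsetP => w hw; exact: pos_sub so1 so2 (in1 w) (in2 w) (posT w hw).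
have hcard := subset_leq_card sub.
rewrite cardsU1 hT Tcard in hcard.
pose v := fun j => (inord (c j) : 'I_n.+1).
have vc y z : v y = v z -> c y = c z.
  by rewrite /v => /(congr1 (@nat_of_ord _)); rewrite !inordK ?ltnS ?cn.
have hv1 y z : v y = v z -> f1 fv y = f1 fv z by move=> h; rewrite !ef1 (vc y z h).
have hv2 y z : v y = v z -> f2 fv y = f2 fv z by move=> h; rewrite !ef2 (vc y z h).
have b1 := @FB_card _ (f1 fv) s1 so1 _ v hv1.
have b2 := @LB_card _ (f1 fv) s1 so1 _ v hv1.
have b3 := @FB_card _ (f2 fv) s2 so2 _ v hv2.
have b4 := @LB_card _ (f2 fv) s2 so2 _ v hv2.
have u1 := @cardU_le _ (FB (f1 fv) s1 :|: LB (f1 fv) s1 :|: FB (f2 fv) s2) (LB (f2 fv) s2).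
have u2 := @cardU_le _ (FB (f1 fv) s1 :|: LB (f1 fv) s1) (FB (f2 fv) s2).
have u3 := @cardU_le _ (FB (f1 fv) s1) (LB (f1 fv) s1).
exfalso; rewrite /= add1n in hcard.
have e4 := leq_add (leq_add (leq_add b1 b2) b3) b4.
have := leq_trans hcard (leq_trans u1 (leq_add (leq_trans u2 (leq_add u3 (leqnn _))) (leqnn _))).
move/leq_trans/(_ e4) => h; move: h hN; clear; lia.
Qed.
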